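(* Let $N\in\mathbb{N}$. Consider parameters $(D,b_1,\dots,b_N,r_1,\dots,r_N)$ with $D>0$, $b_i>0$ for $1\le i\le N$, and $0<r_1<r_2<\cdots<r_N$ (no relation between $D$ and $h:=\sum_{i=1}^N b_i/r_i$ is assumed; $D>h$, $D=h$ and $D<h$ are all allowed). For $k\in\mathbb{N}$ define the polynomial $$P_N^k(\lambda)=\Big(D+\frac{\lambda^2}{(2k-1)^2}\Big)\prod_{j=1}^N(\lambda+r_j)-\sum_{i=1}^N b_i\prod_{\substack{1\le j\le N\\ j\neq i}}(\lambda+r_j),$$ a polynomial of degree $N+2$ in $\lambda$, and call the multiset of its $N+2$ complex roots (counted with multiplicity) the cluster of eigenvalues associated with $k$. Let $k_1,k_2\in\mathbb{N}$ with $k_1<k_2$. Then the parameters $D, b_1,\dots,b_N, r_1,\dots,r_N$ are uniquely determined by (and can be recovered from) the two clusters of eigenvalues associated with $k=k_1$ and $k=k_2$; that is, if two admissible parameter tuples yield the same clusters for $k_1$ and for $k_2$, then the tuples coincide.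
   Context: This arises from the extended Burgers model $\partial_t^2u=D\,\partial_x^2u-\sum_{i=1}^N b_i\int_0^t e^{-r_i(t-\tau)}\partial_x^2u(\tau,x)\,d\tau$ on $(0,\pi/2)$ with $u(t,0)=0$, $\partial_xu(t,\pi/2)=0$; replacing $\partial_x^2$ by its eigenvalue $-(2k-1)^2$ (eigenfunction $\sin(2k-1)x$) in the first-order augmented system for $(u,\partial_tu,w_1,\dots,w_N)$ gives an $(N+2)\times(N+2)$ matrix whose eigenvalues (''clustered eigenvalues'') are exactly the roots of $P_N^k$ as defined in the claim. *)

(* Defs.v *)
From HB Require Import structures.
From mathcomp Require Import all_boot all_order all_algebra.
From mathcomp Require Import complex.
Set Implicit Arguments. Unset Strict Implicit. Unset Printing Implicit Defensive.
Import Order.TTheory GRing.Theory Num.Theory.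
Local Open Scope ring_scope.

Definition PNk (R : rcfType) (N k : nat) (D : R) (b r : 'I_N -> R) : {poly R} :=
  (D%:P + ((2 * k%:R - 1) ^+ 2)^-1 *: 'X^2) * \prod_(j < N) ('X + (r j)%:P)
  - \sum_(i < N) (b i)%:P * \prod_(j < N | j != i) ('X + (r j)%:P).

Definition PNkC (R : rcfType) (N k : nat) (D : R) (b r : 'I_N -> R) : {poly R[i]} :=
  map_poly (fun x : R => (x%:C)%C) (PNk k D b r).

(* The cluster of eigenvalues associated with k: the multiset of complex roots
   of P_N^k, represented by its multiplicity function z |-> mup z P. *)
Definition cluster (R : rcfType) (N k : nat) (D : R) (b r : 'I_N -> R) : R[i] -> nat :=
  fun z => mup z (PNkC k D b r).

Definition admissible (R : rcfType) (N : nat) (D : R) (b r : 'I_N -> R) : Prop :=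
  0 < D /\ (forall i, 0 < b i) /\ (forall i, 0 < r i) /\
  (forall i j : 'I_N, (i < j)%N -> r i < r j).

(* Main.v *)
Require Import Defs.
From HB Require Import structures.
From mathcomp Require Import all_boot all_order all_algebra.
From mathcomp Require Import complex.
From mathcomp Require Import ring lra zify.
Set Implicit Arguments. Unset Strict Implicit. Unset Printing Implicit Defensive.
Import Order.TTheory GRing.Theory Num.Theory.
Local Open Scope ring_scope.

Lemma mup_eq_poly (F: closedFieldType) (p q : {poly F}) : p != 0 ->
  lead_coef p = lead_coef q -> (forall z, mup z p = mup z q) -> p = q.
Proof.
move=> p0 lpq hm.
have q0 : q != 0 by rewrite -lead_coef_eq0 -lpq lead_coef_eq0.
have [s hs] := closed_field_poly_normal p.
have [t ht] := closed_field_poly_normal q.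
have c0 : lead_coef p != 0 by rewrite lead_coef_eq0.
have mp : forall z (u : seq F), mup z (lead_coef p *: \prod_(x <- u) ('X - x%:P)) = count_mem z u.
  move=> z u; rewrite -mul_polyC mupMr ?mu_prod_XsubC // rootC //.
have E : \prod_(x <- s) ('X - x%:P) = \prod_(x <- t) ('X - x%:P) :> {poly F}.
  apply: perm_big; apply/allP => x _ /=; apply/eqP.
  by rewrite -!mp -hs lpq -ht.
by rewrite hs ht lpq E.
Qed.

Definition Qp (R : rcfType) N (r : 'I_N -> R) : {poly R} := \prod_(j < N) ('X + (r j)%:P).
Definition Sp (R : rcfType) N (b r : 'I_N -> R) : {poly R} :=
  \sum_(i < N) (b i)%:P * \prod_(j < N | j != i) ('X + (r j)%:P).

Lemma Qp_monic (R : rcfType) N (r : 'I_N -> R) : Qp r \is monic.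
Proof. by apply: monic_prod => j _; rewrite -(opprK (r j)) polyCN monicXsubC. Qed.

Lemma Qp_size (R : rcfType) N (r : 'I_N -> R) : size (Qp r) = N.+1.
Proof.
rewrite /Qp (eq_bigr (fun j => 'X - (- r j)%:P)); last by move=> j _; rewrite polyCN opprK.
by rewrite -big_enum /= size_prod_XsubC -cardE card_ord.
Qed.

Lemma Qp_D1 (R : rcfType) N (r : 'I_N -> R) i :
  Qp r = ('X + (r i)%:P) * \prod_(j < N | j != i) ('X + (r j)%:P).
Proof. by rewrite /Qp (bigD1 i). Qed.

Lemma Qi_size (R : rcfType) N (r : 'I_N -> R) i :
  size (\prod_(j < N | j != i) ('X + (r j)%:P)) = N.
Proof.
have := Qp_size r; rewrite (Qp_D1 r i) size_mul ?size_XaddC //.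
  by rewrite add2n => -[->].
  by rewrite -size_poly_eq0 size_XaddC.
apply/monic_neq0/monic_prod => j _; by rewrite -(opprK (r j)) polyCN monicXsubC.
Qed.

Lemma Sp_size (R : rcfType) N (b r : 'I_N -> R) : (size (Sp b r) <= N)%N.
Proof.
rewrite /Sp; apply: (big_ind (fun p : {poly R} => (size p <= N)%N)).
- by rewrite size_poly0.
- by move=> p q hp hq; apply: leq_trans (size_polyD _ _) _; rewrite geq_max hp hq.
move=> i _; have [->|h] := eqVneq (b i) 0.
  by rewrite polyC0 mul0r size_poly0.
by rewrite size_Cmul // Qi_size.
Qed.

Definition ck (R : rcfType) (k : nat) : R := ((2 * k%:R - 1) ^+ 2)^-1.

Lemma ck_nat (R : rcfType) k : (0 < k)%N -> ck R k = (((2*k - 1)^2)%N%:R)^-1.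
Proof.
by move=> k0; rewrite /ck natrX natrB ?natrM //; lia.
Qed.

Lemma ck_neq0 (R : rcfType) k : (0 < k)%N -> ck R k != 0.
Proof. by move=> k0; rewrite ck_nat // invr_eq0 pnatr_eq0; lia. Qed.

Lemma PNkE (R : rcfType) N k (D : R) (b r : 'I_N -> R) :
  PNk k D b r = (D%:P + ck R k *: 'X^2) * Qp r - Sp b r.
Proof. by []. Qed.

Lemma A_props (R : rcfType) k (D : R) : (0 < k)%N ->
  size (D%:P + ck R k *: 'X^2) = 3 /\ lead_coef (D%:P + ck R k *: 'X^2) = ck R k.
Proof.
move=> k0; have c0 := ck_neq0 R k0.
have s3 : size (ck R k *: 'X^2 : {poly R}) = 3 by rewrite size_scale // size_polyXn.
have sD : (size (D%:P) < size (ck R k *: 'X^2 : {poly R}))%N.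
  by rewrite s3; apply: leq_ltn_trans (size_polyC_leq1 _) _.
split; first by rewrite addrC size_polyDl.
by rewrite lead_coefDr // lead_coefZ lead_coefXn mulr1.
Qed.

Lemma PNk_props (R : rcfType) N k (D : R) (b r : 'I_N -> R) : (0 < k)%N ->
  size (PNk k D b r) = N.+3 /\ lead_coef (PNk k D b r) = ck R k.
Proof.
move=> k0; have [sA lA] := A_props D k0.
have A0 : D%:P + ck R k *: 'X^2 != 0 by rewrite -size_poly_eq0 sA.
have sM : size ((D%:P + ck R k *: 'X^2) * Qp r) = N.+3.
  by rewrite size_Mmonic ?Qp_monic // sA Qp_size.
have sS : (size (- Sp b r)%R < size ((D%:P + ck R k *: 'X^2) * Qp r)%R)%N.
  by rewrite size_opp sM; apply: leq_ltn_trans (Sp_size b r) _; lia.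
rewrite PNkE; split; first by rewrite size_polyDl.
by rewrite lead_coefDl // lead_coef_Mmonic ?Qp_monic.
Qed.

Lemma realC_inj (R : rcfType) : injective (fun x : R => (x%:C)%C).
Proof. by move=> x y [] . Qed.

Lemma cluster_eq (R : rcfType) N k (D D' : R) (b r b' r' : 'I_N -> R) : (0 < k)%N ->
  cluster k D b r =1 cluster k D' b' r' -> PNk k D b r = PNk k D' b' r'.
Proof.
move=> k0 hc; apply: (map_inj_poly (@realC_inj R)) => //.
have [_ l1] := PNk_props D b r k0; have [_ l2] := PNk_props D' b' r' k0.
apply: mup_eq_poly.
- rewrite -lead_coef_eq0 /PNkC lead_coef_map_inj //; last exact: realC_inj.
  by rewrite l1; apply/eqP => -[] /eqP; rewrite (negbTE (ck_neq0 R k0)).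
- by rewrite !lead_coef_map_inj ?l1 ?l2 //; exact: realC_inj.
exact: hc.
Qed.

Lemma Qp_root (R : rcfType) N (r : 'I_N -> R) x : (Qp r).[-x] = 0 -> exists j, r j = x.
Proof.
move/eqP; rewrite /Qp horner_prod => /prodf_eq0 [j _].
rewrite hornerD hornerX hornerC addrC subr_eq0 => /eqP e; by exists j.
Qed.

Lemma Qp_rootr (R : rcfType) N (r : 'I_N -> R) j : (Qp r).[- r j] = 0.
Proof.
apply/eqP; rewrite /Qp horner_prod; apply/prodf_eq0; exists j => //.
by rewrite hornerD hornerX hornerC addNr eqxx.
Qed.

Definition incr (R : rcfType) N (r : 'I_N -> R) := forall i j : 'I_N, (i < j)%N -> r i < r j.

Lemma incr_le (R : rcfType) N (r : 'I_N -> R) : incr r -> forall i j : 'I_N, (i <= j)%N -> r i <= r j.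
Proof.
move=> hr i j; rewrite leq_eqVlt => /orP [/eqP h|h].
  by have -> : i = j by apply: val_inj.
exact/ltW/hr.
Qed.

Lemma incr_inj (R : rcfType) N (r : 'I_N -> R) : incr r -> injective r.
Proof.
move=> hr i j e; apply: val_inj => /=.
case: (ltngtP i j) => // h; have := hr _ _ h; by rewrite e ltxx.
Qed.

Lemma incr_eq (R : rcfType) N (r r' : 'I_N -> R) : incr r -> incr r' ->
  (forall i, exists j, r' i = r j) -> (forall i, exists j, r i = r' j) -> r =1 r'.
Proof.
move=> hr hr' h1 h2.
suff H : forall n (i : 'I_N), i = n :> nat -> r i = r' i by move=> i; exact: H.
elim/ltn_ind => n IH i hi.
have [m hm] := h1 i; have [m' hm'] := h2 i.
apply/eqP; rewrite eq_le; apply/andP; split.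
  case: (ltnP m i) => h.
    have := hr' _ _ h; rewrite -(IH m) ?hm ?ltxx //; by rewrite -hi.
  by rewrite hm; apply: incr_le.
case: (ltnP m' i) => h.
  have := hr _ _ h; rewrite (IH m') ?hm' ?ltxx //; by rewrite -hi.
by rewrite hm'; apply: incr_le.
Qed.

Lemma Sp_eval (R : rcfType) N (b r : 'I_N -> R) i : injective r ->
  (Sp b r).[- r i] = b i * \prod_(j < N | j != i) (- r i + r j).
Proof.
move=> ri; rewrite /Sp horner_sum (bigD1 i) //= [X in _ + X]big1 ?addr0.
  by rewrite hornerM hornerC horner_prod; congr (_ * _); apply: eq_bigr => j _;
    rewrite hornerD hornerX hornerC.
move=> i' hi'; rewrite hornerM horner_prod (bigD1 i) 1?eq_sym //=.
by rewrite hornerD hornerX !hornerC addNr mul0r mulr0.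
Qed.

Lemma ck_diff (R : rcfType) k1 k2 : (0 < k1)%N -> (k1 < k2)%N -> ck R k1 - ck R k2 != 0.
Proof.
move=> k0 k12; rewrite subr_eq0 ck_nat // ck_nat; last by lia.
apply/negP => /eqP /invr_inj /eqP; rewrite eqr_nat => /eqP h.
move: h; rewrite !expnS expn0 !muln1; nia.
Qed.

Lemma PNk_diff (R : rcfType) N k1 k2 (D : R) (b r : 'I_N -> R) :
  PNk k1 D b r - PNk k2 D b r = ((ck R k1 - ck R k2) *: 'X^2) * Qp r.
Proof. rewrite !PNkE -!mul_polyC polyCB; ring. Qed.

Unset Implicit Arguments.
Set Strict Implicit.
Theorem theorem2p1 (R : rcfType) (N : nat) (k1 k2 : nat)
  (D D' : R) (b r b' r' : 'I_N -> R) :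
  (0 < k1)%N -> (k1 < k2)%N ->
  admissible D b r -> admissible D' b' r' ->
  cluster k1 D b r =1 cluster k1 D' b' r' ->
  cluster k2 D b r =1 cluster k2 D' b' r' ->
  D = D' /\ b =1 b' /\ r =1 r'.
Proof.
move=> k10 k12 [_ [_ [_ hr]]] [_ [_ [_ hr']]] h1 h2.
have k20 : (0 < k2)%N by lia.
have e1 := cluster_eq k10 h1; have e2 := cluster_eq k20 h2.
have nz : (ck R k1 - ck R k2) *: 'X^2 != 0 :> {poly R}.
  by rewrite scaler_eq0 negb_or ck_diff // -size_poly_eq0 size_polyXn.
have hQ : Qp r = Qp r'.
  by apply: (mulfI nz); rewrite -(PNk_diff k1 k2 D b) -(PNk_diff k1 k2 D' b') e1 e2.
have hS : (D - D')%:P * Qp r = Sp b r - Sp b' r'.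
  apply/eqP; rewrite -subr_eq0; apply/eqP.
  transitivity (PNk k1 D b r - PNk k1 D' b' r'); last by rewrite e1 subrr.
  rewrite !PNkE -hQ -!mul_polyC polyCB; ring.
have hD : D = D'.
  apply/eqP; rewrite -subr_eq0; apply/negPn/negP => hne.
  have := Sp_size b r; have := Sp_size b' r'.
  have : size ((D - D')%:P * Qp r) = size (Sp b r - Sp b' r') by rewrite hS.
  rewrite size_Cmul // Qp_size => e.
  have := size_polyD (Sp b r) (- Sp b' r'); rewrite size_polyN -e.
  by move=> h3 h4 h5; move: h3; rewrite ltnNge geq_max h4 h5.
have err : r =1 r'.
  apply: incr_eq => // i.
    have [j hj] : exists j, r j = r' i by apply: Qp_root; rewrite hQ Qp_rootr.
    by exists j.
  have [j hj] : exists j, r' j = r i by apply: Qp_root; rewrite -hQ Qp_rootr.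
  by exists j.
split => //; split => // i.
have ri : injective r by apply: incr_inj.
move: hS; rewrite hD subrr polyC0 mul0r => /eqP; rewrite eq_sym subr_eq0 => /eqP hS.
have hS' : Sp b' r' = Sp b' r.
  rewrite /Sp; apply: eq_bigr => i' _; congr (_ * _); apply: eq_bigr => j _.
  by rewrite err.
have := congr1 (fun p => p.[- r i]) hS; rewrite /= hS' !Sp_eval //.
apply: mulIf; apply/prodf_neq0 => j hj.
rewrite addrC subr_eq0; apply/eqP => /ri /eqP; by rewrite (negbTE hj).
Qed.
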